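(* Let $\mathcal{C}_1$ and $\mathcal{C}_2$ be binary linear codes with parameters $(n_1,k_1,d_1)$ and $(n_2,k_2,d_2)$, respectively. Then $\mathcal{C}_3 = \{(u,v) : u \in \mathcal{C}_1,\ v\in \mathcal{C}_2\}$ is an $(n_1+n_2,\,k_1+k_2,\,\min\{d_1,d_2\})$ code with $$\rho(\mathcal{C}_3) \le \rho(\mathcal{C}_1) + \rho(\mathcal{C}_2).$$
   Context: An $(n,k,d)$ code is a linear code of length $n$, dimension $k$ and minimum Hamming distance $d$. A parity-check matrix for a linear code $\mathcal{C}$ is any matrix (possibly with linearly dependent rows) whose rows span $\mathcal{C}^\perp$. For a parity-check matrix $H$, the stopping distance $s(H)$ is the largest integer such that for every set of $s(H)-1$ or fewer columns of $H$, the projection of $H$ onto those columns contains at least one row of Hamming weight exactly one. The stopping redundancy $\rho(\mathcal{C})$ is the smallest number of rows of a parity-check matrix $H$ for $\mathcal{C}$ with $s(H) = d(\mathcal{C})$, the minimum distance of $\mathcal{C}$. *)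

(* Defs.v *)
From mathcomp Require Import all_boot all_algebra.
Set Implicit Arguments. Unset Strict Implicit. Unset Printing Implicit Defensive.
Import GRing.Theory.
Local Open Scope ring_scope.

Definition is_linear_code n (C : {set 'rV['F_2]_n}) : Prop :=
  forall (a : 'F_2) x y, x \in C -> y \in C -> a *: x + y \in C.

Definition wt n (x : 'rV['F_2]_n) : nat := #|[set j : 'I_n | x 0 j != 0]|.

Definition code_dim n (C : {set 'rV['F_2]_n}) (k : nat) : Prop :=
  is_linear_code C /\ #|C| = (2 ^ k)%N.

(* minimum Hamming distance of a linear code = minimum nonzero weight *)
Definition min_dist n (C : {set 'rV['F_2]_n}) (d : nat) : Prop :=
  (exists2 c, c \in C & (c != 0) && (wt c == d)) /\
  (forall c, c \in C -> c != 0 -> (d <= wt c)%N).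

Definition is_code n (C : {set 'rV['F_2]_n}) (k d : nat) : Prop :=
  is_linear_code C /\ code_dim C k /\ min_dist C d.

Definition dual_code n (C : {set 'rV['F_2]_n}) : {set 'rV['F_2]_n} :=
  [set y : 'rV['F_2]_n | [forall x in C, x *m y^T == 0]].

(* H (r rows, possibly dependent) is a parity-check matrix for C:
   its rows span the dual code *)
Definition parity_check n r (C : {set 'rV['F_2]_n}) (H : 'M['F_2]_(r, n)) : bool :=
  [set u *m H | u : 'rV['F_2]_r] == dual_code C.

Definition has_wt1_row n r (H : 'M['F_2]_(r, n)) (S : {set 'I_n}) : bool :=
  [exists i : 'I_r, #|[set j in S | H i j != 0]| == 1%N].

Definition stop_ok n r (H : 'M['F_2]_(r, n)) (s : nat) : bool :=
  [forall S : {set 'I_n}, ((S != set0) && (#|S| < s)%N) ==> has_wt1_row H S].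

Definition stopping_distance_is n r (H : 'M['F_2]_(r, n)) (s : nat) : bool :=
  stop_ok H s && ~~ stop_ok H s.+1.

Definition has_SR n (C : {set 'rV['F_2]_n}) (d r : nat) : bool :=
  [exists H : 'M['F_2]_(r, n), parity_check C H && stopping_distance_is H d].

Definition is_stopping_redundancy n (C : {set 'rV['F_2]_n}) (rho : nat) : Prop :=
  exists d, min_dist C d /\ has_SR C d rho /\ (forall r, has_SR C d r -> (rho <= r)%N).

Definition direct_sum_code n1 n2 (C1 : {set 'rV['F_2]_n1}) (C2 : {set 'rV['F_2]_n2})
  : {set 'rV['F_2]_(n1 + n2)} :=
  [set row_mx u v | u in C1, v in C2].

(* Main.v *)
Require Import Defs.
From mathcomp Require Import all_boot all_algebra.
Set Implicit Arguments. Unset Strict Implicit. Unset Printing Implicit Defensive.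
Import GRing.Theory.
Local Open Scope ring_scope.

Lemma card_split n1 n2 (f : 'I_(n1+n2) -> bool) :
  #|[set j | f j]| = (#|[set i | f (lshift n2 i)]| + #|[set i | f (rshift n1 i)]|)%N.
Proof. by rewrite -!sum1dep_card big_split_ord. Qed.

Lemma wt_row_mx n1 n2 (u : 'rV['F_2]_n1) (v : 'rV['F_2]_n2) :
  wt (row_mx u v) = (wt u + wt v)%N.
Proof.
rewrite /wt card_split.
by congr (_ + _)%N; apply: eq_card => i; rewrite !inE ?row_mxEl ?row_mxEr.
Qed.

Lemma wt0 n : wt (0 : 'rV['F_2]_n) = 0%N.
Proof. by apply/eqP; rewrite cards_eq0; apply/eqP/setP => i; rewrite !inE mxE eqxx. Qed.

Lemma lin_has0 n (C : {set 'rV['F_2]_n}) c : is_linear_code C -> c \in C -> 0 \in C.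
Proof. by move=> L cC; have := L (-1) c c cC cC; rewrite scaleN1r addNr. Qed.

Lemma min_dist_uniq n (C : {set 'rV['F_2]_n}) d d' : min_dist C d -> min_dist C d' -> d = d'.
Proof.
move=> [[c cC /andP[c0 /eqP wc]] H] [[c' cC' /andP[c0' /eqP wc']] H'].
by apply/eqP; rewrite eqn_leq; apply/andP; split; [rewrite -wc'; apply: H | rewrite -wc; apply: H'].
Qed.

Lemma mem_dsum n1 n2 (C1 : {set 'rV['F_2]_n1}) (C2 : {set 'rV['F_2]_n2}) u v :
  (row_mx u v \in direct_sum_code C1 C2) = (u \in C1) && (v \in C2).
Proof.
apply/imset2P/andP => [[u' v' uC vC /eq_row_mx [-> ->]]|[uC vC]] //.
by exists u v.
Qed.

Lemma mem_dsum' n1 n2 (C1 : {set 'rV['F_2]_n1}) (C2 : {set 'rV['F_2]_n2}) x :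
  (x \in direct_sum_code C1 C2) = (lsubmx x \in C1) && (rsubmx x \in C2).
Proof. by rewrite -{1}(hsubmxK x) mem_dsum. Qed.

Lemma dsum_code (n1 n2 k1 k2 d1 d2 : nat)
  (C1 : {set 'rV['F_2]_n1}) (C2 : {set 'rV['F_2]_n2}) :
  is_code C1 k1 d1 -> is_code C2 k2 d2 ->
  is_code (direct_sum_code C1 C2) (k1 + k2) (minn d1 d2).
Proof.
move=> [L1 [[_ K1] [[c1 c1C /andP[c10 /eqP w1]] M1]]] [L2 [[_ K2] [[c2 c2C /andP[c20 /eqP w2]] M2]]].
have z1 := lin_has0 L1 c1C; have z2 := lin_has0 L2 c2C.
have L3 : is_linear_code (direct_sum_code C1 C2).
  move=> a x y; rewrite !mem_dsum' => /andP[x1 x2] /andP[y1 y2].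
  by rewrite linearD linearZ /= L1 //= linearD linearZ /= L2.
split=> //; split.
  split=> //; rewrite /direct_sum_code curry_imset2X card_in_imset ?cardsX ?K1 ?K2 ?expnD //.
  by move=> [a b] [a' b'] _ _ /= /eq_row_mx [-> ->].
split.
  case: (leqP d1 d2) => h.
    exists (row_mx c1 0); first by rewrite mem_dsum c1C z2.
    rewrite wt_row_mx wt0 addn0 w1 eqxx andbT; apply: contra c10 => /eqP.
    by rewrite -row_mx0 => /eq_row_mx [-> _].
  exists (row_mx 0 c2); first by rewrite mem_dsum c2C z1.
  rewrite wt_row_mx wt0 add0n w2 eqxx andbT; apply: contra c20 => /eqP.
  by rewrite -row_mx0 => /eq_row_mx [_ ->].
move=> c; rewrite -(hsubmxK c); move: (lsubmx c) (rsubmx c) => u v.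
rewrite mem_dsum => /andP[uC vC] c0; rewrite wt_row_mx.
have [u0|u0] := eqVneq u 0.
  have v0 : v != 0.
    by apply: contra c0 => /eqP v0; rewrite u0 v0 row_mx0.
  by apply: leq_trans (geq_minr _ _) (leq_trans (M2 _ vC v0) (leq_addl _ _)).
by apply: leq_trans (geq_minl _ _) (leq_trans (M1 _ uC u0) (leq_addr _ _)).
Qed.

Lemma mem_dual3 n1 n2 (C1 : {set 'rV['F_2]_n1}) (C2 : {set 'rV['F_2]_n2}) y1 y2 :
  0 \in C1 -> 0 \in C2 ->
  (row_mx y1 y2 \in dual_code (direct_sum_code C1 C2)) =
  (y1 \in dual_code C1) && (y2 \in dual_code C2).
Proof.
move=> z1 z2; rewrite !inE; apply/forall_inP/andP.
  move=> H; split; apply/forall_inP => x xC.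
    have := H (row_mx x 0); rewrite mem_dsum xC z2 tr_row_mx mul_row_col mul0mx addr0.
    by apply.
  have := H (row_mx 0 x); rewrite mem_dsum xC z1 tr_row_mx mul_row_col mul0mx add0r.
  by apply.
move=> [/forall_inP H1 /forall_inP H2] x; rewrite -(hsubmxK x) mem_dsum.
move=> /andP[a b]; rewrite tr_row_mx mul_row_col.
by rewrite (eqP (H1 _ a)) (eqP (H2 _ b)) addr0.
Qed.

Lemma dsum_pc n1 n2 r1 r2 (C1 : {set 'rV['F_2]_n1}) (C2 : {set 'rV['F_2]_n2})
  (H1 : 'M['F_2]_(r1, n1)) (H2 : 'M['F_2]_(r2, n2)) :
  0 \in C1 -> 0 \in C2 -> parity_check C1 H1 -> parity_check C2 H2 ->
  parity_check (direct_sum_code C1 C2) (block_mx H1 0 0 H2).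
Proof.
move=> z1 z2 /eqP p1 /eqP p2; apply/eqP/setP => y.
rewrite -(hsubmxK y) mem_dual3 // -p1 -p2.
apply/imsetP/andP.
  move=> [u _]; rewrite -(hsubmxK u) mul_row_block ?mul0mx !mulmx0 addr0 add0r.
  by move=> /eq_row_mx [-> ->]; split; apply/imsetP; eexists.
move=> [/imsetP [u1 _ ->] /imsetP [u2 _ ->]]; exists (row_mx u1 u2) => //.
by rewrite mul_row_block ?mul0mx !mulmx0 addr0 add0r.
Qed.

Section Stop.
Variables (n1 n2 r1 r2 : nat) (H1 : 'M['F_2]_(r1, n1)) (H2 : 'M['F_2]_(r2, n2)).
Local Notation H3 := (block_mx H1 0 0 H2).

Definition sl (S : {set 'I_(n1 + n2)}) := [set i | lshift n2 i \in S].
Definition sr (S : {set 'I_(n1 + n2)}) := [set i | rshift n1 i \in S].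
Definition emb1 (S1 : {set 'I_n1}) : {set 'I_(n1 + n2)} :=
  [set j | if split j is inl i then i \in S1 else false].
Definition emb2 (S2 : {set 'I_n2}) : {set 'I_(n1 + n2)} :=
  [set j | if split j is inr i then i \in S2 else false].

Lemma card_sl (S : {set 'I_(n1 + n2)}) : #|S| = (#|sl S| + #|sr S|)%N.
Proof.
have {1}-> : S = [set j | j \in S] by apply/setP => j; rewrite inE.
by rewrite card_split.
Qed.

Lemma sl_emb1 (S1 : {set 'I_n1}) : sl (emb1 S1) = S1.
Proof. by apply/setP => i; rewrite !inE (unsplitK (inl _ i)). Qed.
Lemma sr_emb1 (S1 : {set 'I_n1}) : sr (emb1 S1) = set0.
Proof. by apply/setP => i; rewrite !inE (unsplitK (inr _ i)). Qed.
Lemma sl_emb2 (S2 : {set 'I_n2}) : sl (emb2 S2) = set0.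
Proof. by apply/setP => i; rewrite !inE (unsplitK (inl _ i)). Qed.
Lemma sr_emb2 (S2 : {set 'I_n2}) : sr (emb2 S2) = S2.
Proof. by apply/setP => i; rewrite !inE (unsplitK (inr _ i)). Qed.

Lemma cnt_l i1 (S : {set 'I_(n1 + n2)}) : #|[set j in S | H3 (lshift r2 i1) j != 0]| =
   #|[set j in sl S | H1 i1 j != 0]|.
Proof.
rewrite card_split; set a := (X in (X + _)%N); set b := (X in (_ + X)%N).
have -> : b = 0%N.
  by apply/eqP; rewrite /b cards_eq0; apply/eqP/setP => j; rewrite !inE block_mxEur mxE eqxx andbF.
by rewrite addn0 /a; apply: eq_card => j; rewrite !inE block_mxEul.
Qed.

Lemma cnt_r i2 (S : {set 'I_(n1 + n2)}) : #|[set j in S | H3 (rshift r1 i2) j != 0]| =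
   #|[set j in sr S | H2 i2 j != 0]|.
Proof.
rewrite card_split; set a := (X in (X + _)%N); set b := (X in (_ + X)%N).
have -> : a = 0%N.
  by apply/eqP; rewrite /a cards_eq0; apply/eqP/setP => j; rewrite !inE block_mxEdl mxE eqxx andbF.
by rewrite add0n /b; apply: eq_card => j; rewrite !inE block_mxEdr.
Qed.

Lemma wt1_3 (S : {set 'I_(n1 + n2)}) : has_wt1_row H3 S = has_wt1_row H1 (sl S) || has_wt1_row H2 (sr S).
Proof.
apply/existsP/orP.
  move=> [i]; rewrite -(splitK i); case: (split i) => [i1|i2] /=.
    by rewrite cnt_l => h; left; apply/existsP; exists i1.
  by rewrite cnt_r => h; right; apply/existsP; exists i2.
case=> /existsP [i h].
  by exists (lshift r2 i); rewrite cnt_l.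
by exists (rshift r1 i); rewrite cnt_r.
Qed.

Lemma wt1_set0 r n (H : 'M['F_2]_(r, n)) : has_wt1_row H set0 = false.
Proof.
apply/existsP => [[i]]; have -> : [set j in set0 | H i j != 0] = set0.
  by apply/setP => j; rewrite !inE.
by rewrite cards0.
Qed.

Lemma stop_ok3 s : stop_ok H3 s = stop_ok H1 s && stop_ok H2 s.
Proof.
apply/forallP/andP.
  move=> h; split; apply/forallP => S; apply/implyP => /andP [S0 Ss].
    have := h (emb1 S); rewrite wt1_3 sl_emb1 sr_emb1 wt1_set0 orbF.
    rewrite (card_sl (emb1 S)) sl_emb1 sr_emb1 cards0 addn0 Ss andbT => /implyP; apply.
    apply: contra S0 => /eqP e; by rewrite -(sl_emb1 S) e; apply/eqP/setP => i; rewrite !inE.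
  have := h (emb2 S); rewrite wt1_3 sl_emb2 sr_emb2 wt1_set0 /=.
  rewrite (card_sl (emb2 S)) sl_emb2 sr_emb2 cards0 add0n Ss andbT => /implyP; apply.
  apply: contra S0 => /eqP e; by rewrite -(sr_emb2 S) e; apply/eqP/setP => i; rewrite !inE.
move=> [/forallP h1 /forallP h2] S; apply/implyP => /andP [S0 Ss].
rewrite wt1_3; have cS := card_sl S.
have [e1|ne1] := eqVneq (sl S) set0.
  have ne2 : sr S != set0.
    apply: contra S0 => /eqP e2; apply/eqP/setP => j; rewrite inE.
    rewrite -(splitK j); case: (split j) => [i|i] /=.
      by have := in_set0 i; rewrite -e1 inE.
    by have := in_set0 i; rewrite -e2 inE.
  apply/orP; right; apply: (implyP (h2 (sr S))); rewrite ne2 /=.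
  by apply: leq_ltn_trans Ss; rewrite cS leq_addl.
apply/orP; left; apply: (implyP (h1 (sl S))); rewrite ne1 /=.
by apply: leq_ltn_trans Ss; rewrite cS leq_addr.
Qed.

End Stop.

Lemma stop_ok_mono r n (H : 'M['F_2]_(r, n)) s t : (t <= s)%N -> stop_ok H s -> stop_ok H t.
Proof.
move=> ts /forallP h; apply/forallP => S; apply/implyP => /andP [S0 St].
by apply: (implyP (h S)); rewrite S0 /=; apply: leq_trans St ts.
Qed.

Lemma sd3 n1 n2 r1 r2 (H1 : 'M['F_2]_(r1, n1)) (H2 : 'M['F_2]_(r2, n2)) d1 d2 :
  stopping_distance_is H1 d1 -> stopping_distance_is H2 d2 ->
  stopping_distance_is (block_mx H1 0 0 H2) (minn d1 d2).
Proof.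
move=> /andP [a1 b1] /andP [a2 b2]; rewrite /stopping_distance_is !stop_ok3.
rewrite (stop_ok_mono (geq_minl _ _) a1) (stop_ok_mono (geq_minr _ _) a2) /=.
by case: (leqP d1 d2) => _; rewrite ?(negbTE b1) ?(negbTE b2) ?andbF.
Qed.

Theorem theorem7 (n1 n2 k1 k2 d1 d2 : nat)
  (C1 : {set 'rV['F_2]_n1}) (C2 : {set 'rV['F_2]_n2}) (rho1 rho2 : nat) :
  is_code C1 k1 d1 -> is_code C2 k2 d2 ->
  is_stopping_redundancy C1 rho1 -> is_stopping_redundancy C2 rho2 ->
  is_code (direct_sum_code C1 C2) (k1 + k2) (minn d1 d2) /\
  exists rho3, is_stopping_redundancy (direct_sum_code C1 C2) rho3 /\
               (rho3 <= rho1 + rho2)%N.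
Proof.
move=> c1 c2 [d1' [md1 [sr1 _]]] [d2' [md2 [sr2 _]]].
have c1' := c1; have c2' := c2.
move: c1' c2' => [L1 [_ [[x1 x1C _] _]]] [L2 [_ [[x2 x2C _] _]]].
have e1 : d1' = d1 by apply: min_dist_uniq md1 c1.2.2.
have e2 : d2' = d2 by apply: min_dist_uniq md2 c2.2.2.
subst d1' d2'.
have c3 := dsum_code c1 c2.
split=> //.
have hsr : has_SR (direct_sum_code C1 C2) (minn d1 d2) (rho1 + rho2).
  move: sr1 sr2 => /existsP [H1 /andP [p1 s1]] /existsP [H2 /andP [p2 s2]].
  apply/existsP; exists (block_mx H1 0 0 H2).
  by rewrite dsum_pc ?(lin_has0 L1 x1C) ?(lin_has0 L2 x2C) // sd3.
have hex : exists r, has_SR (direct_sum_code C1 C2) (minn d1 d2) r by exists (rho1 + rho2)%N.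
have [m hm hmin] := ex_minnP hex.
exists m; split; last exact: hmin.
exists (minn d1 d2); split; first exact: c3.2.2.
by split.
Qed.
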